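(* Let $M$ be a matroid on ground set $E$ and let $B_1<B_2<\dots<B_n$ be an ordering of all its bases such that for every $i=1,\dots,n$ there exists a linear functional $\ell_i\in(\mathbb{R}^E)^*$ with $\ell_i(B_j)<\ell_i(B_i)$ if and only if $j<i$. Then this order is a shelling order of $\mathcal{I}(M)$, and the restriction set of each basis $B_i$ is $\mathcal{R}(B_i)=IP_{\ell_i}(B_i)$.
   Context: A linear functional $\ell\in(\mathbb{R}^E)^*$ is identified with a function $\ell:E\to\mathbb{R}$, and $\ell(B)=\sum_{b\in B}\ell(b)$ (equivalently, $\ell$ evaluated at the characteristic vector $\chi_B$). $\mathcal{I}(M)$ is the independence complex of $M$, whose facets are the bases. A shelling order of a pure simplicial complex is a total order $F_1<\dots<F_k$ of its facets such that for each $j\ge2$, $\langle F_1,\dots,F_{j-1}\rangle\cap\langle F_j\rangle$ is pure of dimension one less than the complex; the restriction set $\mathcal{R}(F_j)$ is the unique subset of $F_j$ such that the faces of $\langle F_1,\dots,F_j\rangle$ not in $\langle F_1,\dots,F_{j-1}\rangle$ are exactly the subsets of $F_j$ containing $\mathcal{R}(F_j)$. For a basis $B$, $IP_\ell(B)$ (the internally passive set with respect to the order on $E$ induced by $\ell$) is the set of $b\in B$ for which there is $b'\in E\setminus B$ with $\ell(b')<\ell(b)$ and $(B\setminus\{b\})\cup\{b'\}$ a basis. *)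

(* Defs.v *)
From mathcomp Require Import all_boot all_order all_algebra.
Set Implicit Arguments. Unset Strict Implicit. Unset Printing Implicit Defensive.
Import Order.TTheory GRing.Theory Num.Theory.

Section Defs.
Variable E : finType.

Definition is_matroid_bases (bases : {set {set E}}) : Prop :=
  bases != set0 /\
  forall B1 B2, B1 \in bases -> B2 \in bases ->
    forall x, x \in B1 :\: B2 ->
      exists2 y, y \in B2 :\: B1 & (B1 :\ x) :|: [set y] \in bases.

Definition independent (bases : {set {set E}}) (X : {set E}) : Prop :=
  exists2 B, B \in bases & X \subset B.

Definition lval (R : numDomainType) (l : E -> R) (B : {set E}) : R :=
  (\sum_(b in B) l b)%R.

Definition IP (R : numDomainType) (bases : {set {set E}}) (l : E -> R)
    (B : {set E}) : {set E} :=
  [set b in B | [exists b', [&& b' \notin B, (l b' < l b)%R &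
                                 (B :\ b) :|: [set b'] \in bases]]].

(* Faces of the subcomplex <F_1,...,F_{j-1}> generated by the first j facets
   (0-based) of the sequence s. *)
Definition in_prefix_complex (s : seq {set E}) (j : nat) (X : {set E}) : bool :=
  has (fun F : {set E} => X \subset F) (take j s).

(* A collection of faces K is pure with faces of maximal cardinality k
   (i.e. pure of dimension k-1): every face has size <= k and lies in a face
   of size exactly k. *)
Definition pure_of_card (K : {set E} -> bool) (k : nat) : Prop :=
  (forall X, K X -> #|X| <= k) /\
  (forall X, K X -> exists Y, [/\ K Y, X \subset Y & #|Y| = k]).

Definition complex_card (s : seq {set E}) : nat := \max_(F <- s) #|F|.

(* s is a shelling order of the pure simplicial complex whose facets are
   the elements of `facets`: s lists all the facets exactly once, and for each
   j >= 2 (0-based: 0 < j), <F_1..F_{j-1}> cap <F_j> is pure of dimension one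
   less than the complex. *)
Definition shelling_order (facets : {set {set E}}) (s : seq {set E}) : Prop :=
  [/\ uniq s, (forall F, (F \in s) = (F \in facets)) &
      forall j, 0 < j < size s ->
        pure_of_card
          (fun X => (X \subset nth set0 s j) && in_prefix_complex s j X)
          (complex_card s).-1].

(* R is the restriction set of the j-th facet (0-based) in s: R is a subset of
   F_j and the faces of <F_1..F_j> not in <F_1..F_{j-1}> are exactly the subsets
   of F_j containing R. *)
Definition is_restriction_set (s : seq {set E}) (j : nat) (R : {set E}) : Prop :=
  R \subset nth set0 s j /\
  forall X, (in_prefix_complex s j.+1 X && ~~ in_prefix_complex s j X)
            = (R \subset X) && (X \subset nth set0 s j).

End Defs.

(* Main.v *)
Require Import Defs.
From mathcomp Require Import all_boot all_order all_algebra.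
From mathcomp Require Import ring lra zify.
Import Order.TTheory GRing.Theory Num.Theory.
Set Implicit Arguments. Unset Strict Implicit. Unset Printing Implicit Defensive.

Section Matroid.
Variable E : finType.
Variable F : {set {set E}}.
Hypothesis exch : forall B1 B2, B1 \in F -> B2 \in F ->
    forall x, x \in B1 :\: B2 ->
      exists2 y, y \in B2 :\: B1 & (B1 :\ x) :|: [set y] \in F.

Lemma no_nest B1 B2 : B1 \in F -> B2 \in F -> B1 \subset B2 -> B1 = B2.
Proof.
move=> h1 h2 sub; apply/eqP; rewrite eqEsubset sub /=.
apply/subsetP => x xB2; apply/negPn/negP => xB1.
have hx : x \in B2 :\: B1 by rewrite inE xB1 xB2.
have [y] := exch h2 h1 hx.
rewrite inE => /andP[nyB2 /(subsetP sub) yB2] _.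
by rewrite yB2 in nyB2.
Qed.

Lemma card_swap (B : {set E}) b b' : b \in B -> b' \notin B ->
  #|B :\ b :|: [set b']| = #|B|.
Proof.
move=> hb hb'; rewrite setUC cardsU1 (cardsD1 b B) hb !inE negb_and hb' orbT.
by rewrite addnC.
Qed.

Lemma equicard B1 B2 : B1 \in F -> B2 \in F -> #|B1| = #|B2|.
Proof.
move=> h1 h2; move: {2}#|B1 :\: B2| (leqnn #|B1 :\: B2|) => n.
elim: n B1 h1 => [|n IH] B1 h1 hn.
  have: B1 \subset B2 by rewrite -setD_eq0 -cards_eq0 -leqn0.
  by move/(no_nest h1 h2) ->.
case: (set_0Vmem (B1 :\: B2)) => [/eqP|[x hx]].
  by rewrite setD_eq0 => /(no_nest h1 h2) ->.
have [y hy hB] := exch h1 h2 hx.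
move: (hx) (hy); rewrite !inE => /andP[xB2 xB1] /andP[yB1 yB2].
rewrite -(IH _ hB); first by rewrite card_swap.
have sub : (B1 :\ x :|: [set y]) :\: B2 \subset (B1 :\: B2) :\ x.
  apply/subsetP => z; rewrite !inE => /andP[zB2 /orP[/andP[zx zB1]|/eqP zy]].
    by rewrite zx zB2 zB1.
  by rewrite zy yB2 in zB2.
apply: leq_trans (subset_leq_card sub) _.
by move: hn; rewrite (cardsD1 x (B1 :\: B2)) hx.
Qed.

Lemma sym_exch B1 B2 y : B1 \in F -> B2 \in F -> y \in B2 :\: B1 ->
  exists2 x, x \in B1 :\: B2 & (B1 :\ x) :|: [set y] \in F.
Proof.
move=> h1 h2 hy; move: (hy); rewrite inE => /andP[yB1 yB2].
pose P := fun C : {set E} => (C \in F) && (y |: (B1 :&: B2) \subset C).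
have P2 : P B2 by rewrite /P h2 /= subUset sub1set yB2 subsetIr.
case: (arg_maxnP (fun C => #|C :&: B1|) P2) => B3 /andP[h3 s3] max3.
have y3 : y \in B3 by apply: (subsetP s3); rewrite !inE eqxx.
have sI3 : B1 :&: B2 \subset B3 by apply: subset_trans s3; apply: subsetUr.
have B3sub : B3 \subset y |: B1.
  apply/subsetP => z z3; rewrite !inE; case: eqP => //= zy.
  apply/negPn/negP => zB1.
  have hz : z \in B3 :\: B1 by rewrite inE zB1 z3.
  have [w hw hC] := exch h3 h1 hz.
  move: hw; rewrite inE => /andP[wB3 wB1].
  have PC : P (B3 :\ z :|: [set w]).
    rewrite /P hC /=; apply/subsetP => u; rewrite !inE.
    case/orP=> [/eqP->|/andP[uB1 uB2]].
      by rewrite y3 andbT; apply/orP; left; apply/negP => /eqP e; apply: zy; rewrite e.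
    have u3 : u \in B3 by apply: (subsetP sI3); rewrite inE uB1 uB2.
    have uz : u != z by apply/negP => /eqP e; rewrite e in uB1; rewrite uB1 in zB1.
    by rewrite u3 uz.
  have := max3 _ PC.
  have pr : B3 :&: B1 \proper (B3 :\ z :|: [set w]) :&: B1.
    apply/properP; split.
      apply/subsetP => u; rewrite !inE => /andP[u3 uB1].
      have uz : u != z by apply/negP => /eqP e; rewrite e in uB1; rewrite uB1 in zB1.
      by rewrite uB1 u3 uz.
    exists w; first by rewrite !inE eqxx orbT wB1.
    by rewrite !inE (negbTE wB3).
  by move/proper_card: pr; rewrite ltnNge => /negP.
have c3 : #|B3| = #|B1| by apply: equicard.
have D3 : B3 :\: B1 = [set y].
  apply/setP => u; rewrite !inE; case: (u =P y) => [->|uy].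
    by rewrite yB1 y3.
  apply/negP => /andP[uB1 u3]; move: (subsetP B3sub u u3).
  by rewrite !inE (negbTE uB1) orbF => /eqP.
have c1 : #|B1 :\: B3| == 1.
  move: (cardsID B1 B3) (cardsID B3 B1); rewrite D3 cards1 setIC c3.
  move=> e1 e2; apply/eqP; lia.
case/cards1P: c1 => x hx.
have xin : x \in B1 :\: B3 by rewrite hx set11.
move: (xin); rewrite inE => /andP[x3 xB1].
exists x.
  rewrite inE xB1 andbT; apply/negP => xB2.
  by move: x3; rewrite (subsetP sI3) // inE xB1 xB2.
suff -> : B1 :\ x :|: [set y] = B3 by [].
apply/setP => u; rewrite !inE; case: (u =P y) => [->|uy]; first by rewrite y3 orbT.
rewrite orbF; apply/idP/idP.
  case/andP => ux uB1; apply/negPn/negP => u3.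
  have : u \in B1 :\: B3 by rewrite inE u3 uB1.
  by rewrite hx inE (negbTE ux).
move=> u3; move: (subsetP B3sub u u3); rewrite !inE; case: (u =P y) => //= _ uB1.
by rewrite uB1 andbT; apply/eqP => e; subst u; rewrite u3 in x3.
Qed.

Variable R : realFieldType.

Lemma exmin (T : finType) (A : {set T}) (f : T -> R) a0 : a0 \in A ->
  exists2 a, a \in A & forall b, b \in A -> (f a <= f b)%R.
Proof.
move=> h; case: (Order.TotalTheory.arg_minP (P := mem A) f h) => a ha hm.
by exists a.
Qed.

Lemma lval_exch (l : E -> R) (B : {set E}) (b b' : E) : b \in B -> b' \notin B ->
  lval l (B :\ b :|: [set b']) = (lval l B - l b + l b')%R.
Proof.
move=> hb hb'; rewrite /lval setUC big_setU1 /=; last first.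
  by rewrite !inE negb_and hb' orbT.
rewrite (big_setD1 b hb) /=.
ring.
Qed.

Lemma key (l : E -> R) (B B' : {set E}) : B \in F -> B' \in F -> (lval l B' < lval l B)%R ->
  exists b, exists2 b', [/\ b \in B :\: B', b' \in B' :\: B & (l b' < l b)%R]
     & B :\ b :|: [set b'] \in F.
Proof.
move=> hB; move: {2}#|B :\: B'| (leqnn #|B :\: B'|) => n.
elim: n B' => [|n IH] B' hn hB' hlt.
  have: B \subset B' by rewrite -setD_eq0 -cards_eq0 -leqn0.
  by move/(no_nest hB hB') => e; rewrite e ltxx in hlt.
case: (set_0Vmem (B :\: B')) => [/eqP|[x0 hx0]].
  by rewrite setD_eq0 => /(no_nest hB hB') e; rewrite e ltxx in hlt.
case: (set_0Vmem (B' :\: B)) => [/eqP|[y0 hy0]].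
  by rewrite setD_eq0 => /(no_nest hB' hB) e; rewrite e ltxx in hlt.
have [e he emin] := exmin l hx0.
have [e' he' emin'] := exmin l hy0.
case: (leP (l e) (l e')) => cmp.
- have [z hz hB''] := sym_exch hB' hB he.
  move: (he) (hz); rewrite !inE => /andP[eB' eB] /andP[zB zB'].
  have hlt' : (lval l (B' :\ z :|: [set e]) < lval l B)%R.
    rewrite lval_exch //; apply: le_lt_trans hlt.
    have : (l e <= l z)%R by apply: le_trans cmp _; apply: emin'; rewrite inE zB zB'.
    lra.
  have sub : B :\: (B' :\ z :|: [set e]) \subset (B :\: B') :\ e.
    apply/subsetP => u; rewrite !inE negb_or negb_and => /andP[/andP[/orP[uz|uB'] ue] uB].
      by move: uz; rewrite negbK => /eqP uz; rewrite uz (negbTE zB) in uB.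
    by rewrite ue uB' uB.
  have hn' : #|B :\: (B' :\ z :|: [set e])| <= n.
    apply: leq_trans (subset_leq_card sub) _.
    by move: hn; rewrite (cardsD1 e (B :\: B')) he.
  have [b [b' [hb hb' hl] hF]] := IH _ hn' hB'' hlt'.
  exists b; exists b' => //; split => //.
    by apply: (subsetP (subset_trans sub (subD1set _ _))).
  move: hb'; rewrite !inE => /andP[b'B /orP[/andP[_ ->]|/eqP b'e]]; first by rewrite b'B.
  by rewrite b'e eB in b'B.
- have [x hx hF] := sym_exch hB hB' he'.
  exists x; exists e' => //; split => //.
  by apply: lt_le_trans cmp _; apply: emin.
Qed.
End Matroid.

Lemma prefixP (E : finType) (s : seq {set E}) j (X : {set E}) :
  reflect (exists2 k, (k < j) && (k < size s) & X \subset nth set0 s k)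
          (in_prefix_complex s j X).
Proof.
rewrite /in_prefix_complex; apply: (iffP (@has_nthP _ (fun F : {set E} => X \subset F) (take j s) set0)) => [[k hk hX]|[k /andP[kj ks] hX]].
  move: hk; rewrite size_take_min leq_min => hk; exists k => //.
  by move: hX; rewrite nth_take //; case/andP: hk.
by exists k; rewrite ?size_take_min ?leq_min ?kj ?ks ?nth_take.
Qed.

Theorem lemma6p1 (R : realFieldType) (E : finType) (bases : {set {set E}})
    (s : seq {set E}) (l : nat -> E -> R) :
  is_matroid_bases bases ->
  uniq s -> (forall B, (B \in s) = (B \in bases)) ->
  (forall i j, i < size s -> j < size s ->
     (lval (l i) (nth set0 s j) < lval (l i) (nth set0 s i))%R = (j < i)) ->
  shelling_order bases s /\
  (forall i, i < size s -> is_restriction_set s i (IP bases (l i) (nth set0 s i))).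
Proof.
move=> [hne exch] us hmem hl.
set S := nth set0 s.
have Sb : forall i, i < size s -> S i \in bases by move=> i hi; rewrite -hmem mem_nth.
have idx : forall B, B \in bases -> exists2 k, k < size s & S k = B.
  by move=> B hB; exists (index B s); [rewrite index_mem hmem | rewrite /S nth_index // hmem].
have H : forall j k (X : {set E}), j < size s -> k < size s -> k < j -> X \subset S k ->
   exists b, [/\ b \in S j, b \notin X & exists2 m, m < j & S j :\ b \subset S m].
  move=> j k X hj hk kj hX.
  have hlt : (lval (l j) (S k) < lval (l j) (S j))%R by rewrite hl.
  have [b [b' [hb hb' hlb] hF]] := key exch (Sb j hj) (Sb k hk) hlt.
  have [m hm em] := idx _ hF.
  move: hb hb'; rewrite !inE => /andP[bk bj] /andP[b'j b'k].
  exists b; split => //.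
    by apply/negP => /(subsetP hX); rewrite (negbTE bk).
  exists m; last by rewrite em subsetUl.
  have := hl j m hj hm; rewrite -/(S m) -/(S j) em lval_exch // => <-.
  lra.
have [B0 hB0] : exists B0, B0 \in bases.
  by case: (set_0Vmem bases) => [e|[B0 h]]; [by rewrite e eqxx in hne | exists B0].
have s0 : 0 < size s by case: (idx _ hB0) => k hk _; apply: leq_ltn_trans hk.
pose r := #|S 0|.
have hcard : forall i, i < size s -> #|S i| = r.
  by move=> i hi; apply: (equicard exch); apply: Sb.
have hcc : complex_card s = r.
  rewrite /complex_card; apply/eqP; rewrite eqn_leq; apply/andP; split.
    apply/bigmax_leqP_seq => F0 hF0 _.
    have hF0' : F0 \in bases by rewrite -hmem.
    have [k hk <-] := idx F0 hF0'.
    by rewrite hcard.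
  by apply: (leq_bigmax_seq (S 0)) => //; apply: mem_nth.
have cD : forall j b, j < size s -> b \in S j -> #|S j :\ b| = r.-1.
  by move=> j b hj hb; move: (cardsD1 b (S j)); rewrite hb hcard // => ->.
have XD : forall (X Y : {set E}) b, X \subset Y -> b \notin X -> X \subset Y :\ b.
  move=> X Y b XY bX; apply/subsetP => u uX; rewrite !inE (subsetP XY _ uX) andbT.
  by apply/negP => /eqP e; rewrite -e uX in bX.
split.
  split => //.
  move=> j /andP[j0 js]; rewrite hcc; split.
    move=> X /andP[Xj /prefixP[k /andP[kj ks] Xk]].
    have [b [bj bX [m hm sub]]] := H j k X js ks kj Xk.
    by rewrite -(cD j b) //; apply: subset_leq_card; apply: XD.
  move=> X /andP[Xj /prefixP[k /andP[kj ks] Xk]].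
  have [b [bj bX [m hm sub]]] := H j k X js ks kj Xk.
  exists (S j :\ b); split; last exact: cD.
    rewrite subD1set /=; apply/prefixP; exists m => //.
    by rewrite hm (ltn_trans hm js).
  exact: XD.
move=> i hi; split.
  by apply/subsetP => b; rewrite inE => /andP[].
move=> X; apply/idP/idP.
  case/andP => /prefixP[k /andP[ki ks] Xk] /prefixP np.
  have ek : k = i.
    case: (ltngtP k i) => // [kl|kg].
      by exfalso; apply: np; exists k; rewrite ?kl ?ks.
    by rewrite ltnS leqNgt kg in ki.
  subst k; rewrite Xk andbT.
  apply/subsetP => b; rewrite inE => /andP[bi /existsP[b' /and3P[b'i lb hF]]].
  apply/negPn/negP => bX.
  have [m hm em] := idx _ hF.
  apply: np; exists m.
    rewrite hm andbT; have := hl i m hi hm; rewrite -/(S m) -/(S i) em lval_exch // => <-.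
    lra.
  by rewrite -/(S m) em; apply: subset_trans (XD _ _ _ Xk bX) _; apply: subsetUl.
case/andP => PX Xi; apply/andP; split.
  by apply/prefixP; exists i => //; rewrite ltnSn hi.
apply/negP => /prefixP[k /andP[ki ks] Xk].
have hlt : (lval (l i) (S k) < lval (l i) (S i))%R by rewrite hl.
have [b [b' [hb hb' hlb] hF]] := key exch (Sb i hi) (Sb k ks) hlt.
move: hb hb'; rewrite !inE => /andP[bk bi] /andP[b'i b'k].
have : b \in IP bases (l i) (S i).
  by rewrite inE bi /=; apply/existsP; exists b'; rewrite b'i hlb hF.
by move/(subsetP PX)/(subsetP Xk); rewrite (negbTE bk).
Qed.
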